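(* Let $K$ be a field and $a\in K^{{\mathbb N}}$ a nonzero $K$-recurrence sequence of order $d$. (a) If $K$ has characteristic $0$ and $a$ is nondegenerate, then ${\mathcal Z}(a)$ does not contain a $(d-1)$-balanced subset. (b) If $K$ has positive characteristic and $a$ is simple and nondegenerate, then ${\mathcal Z}(a)$ does not contain a $(d-1)$-balanced subset.
   Context: ${\mathbb N}=\{0,1,2,\dots\}$, ${\mathcal Z}(a)=\{n\in{\mathbb N}\mid a(n)=0\}$. The minimum polynomial $P_a$ is the monic generator of $\{P\in K[E]\mid P(E)a=0\}$, $(Ea)(n)=a(n+1)$; its degree is the order of $a$. $a$ is simple if $P_a$ has distinct roots and nondegenerate if its roots are nonzero and no quotient of two distinct roots is a root of unity. For an integer $e\ge0$, an $e$-balanced subset of ${\mathbb N}$ is a set $\{m_0+k_1m_1+\cdots+k_em_e\mid k_1,\dots,k_e\in\{0,1\}\}$ with $m_0\in{\mathbb N}$ and $m_1,\dots,m_e$ positive integers. *)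

(* Defs.v *)
From HB Require Import structures.
From mathcomp Require Import all_boot all_order all_algebra.
Set Implicit Arguments. Unset Strict Implicit. Unset Printing Implicit Defensive.
Import GRing.Theory.
Local Open Scope ring_scope.

Section RecSeq.
Variable K : fieldType.

(* (P(E) a)(n) = sum_i P_i a(n+i), where (E a)(n) = a(n+1) *)
Definition polyE_apply (P : {poly K}) (a : nat -> K) : nat -> K :=
  fun n => \sum_(i < size P) P`_i * a (n + i)%N.

Definition annihilates (P : {poly K}) (a : nat -> K) : Prop :=
  forall n, polyE_apply P a n = 0.

Definition is_recurrence (a : nat -> K) : Prop :=
  exists P : {poly K}, P != 0 /\ annihilates P a.

Definition is_min_poly (a : nat -> K) (P : {poly K}) : Prop :=
  P \is monic /\ annihilates P a /\
  (forall Q : {poly K}, annihilates Q a -> P %| Q).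

Definition rec_order (P : {poly K}) : nat := (size P).-1.

Definition zero_set (a : nat -> K) : nat -> Prop := fun n => a n = 0.

(* Roots are taken in (arbitrary) field extensions of K, given by a ring
   morphism f : K -> L; this is equivalent to taking roots in an algebraic
   closure of K. *)

Definition simple_poly (P : {poly K}) : Prop :=
  forall (L : fieldType) (f : {rmorphism K -> L}) (x : L),
    ~ (('X - x%:P) ^+ 2 %| map_poly f P).

Definition nondegenerate_poly (P : {poly K}) : Prop :=
  forall (L : fieldType) (f : {rmorphism K -> L}) (x y : L),
    root (map_poly f P) x -> root (map_poly f P) y ->
    x != 0 /\ (x != y -> forall n : nat, (0 < n)%N -> (x / y) ^+ n != 1).

(* S is an e-balanced subset:
   S = { m0 + k_1 m_1 + ... + k_e m_e | k_i in {0,1} }, m_i > 0.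
   We index m_1..m_e as m 0 .. m (e-1). *)
Definition balanced_set (e : nat) (S : nat -> Prop) : Prop :=
  exists (m0 : nat) (m : 'I_e -> nat), (forall i, (0 < m i)%N) /\
    (forall s : nat, S s <->
       exists k : 'I_e -> bool, s = (m0 + \sum_(i < e) k i * m i)%N).

Definition contains_balanced (e : nat) (Z : nat -> Prop) : Prop :=
  exists S : nat -> Prop, balanced_set e S /\ (forall s, S s -> Z s).

End RecSeq.

(* Main.v *)
Require Import Defs.
From HB Require Import structures.
From mathcomp Require Import all_boot all_order all_algebra all_field.
From Stdlib Require Import Classical.
Set Implicit Arguments. Unset Strict Implicit. Unset Printing Implicit Defensive.
Import GRing.Theory.
Local Open Scope ring_scope.

Section Ops.
Variable F : fieldType.
Implicit Types (p q : {poly F}) (a : nat -> F).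

Lemma pE_wide p a n N : (size p <= N)%N ->
  polyE_apply p a n = \sum_(i < N) p`_i * a (n + i)%N.
Proof.
move=> hN; rewrite /polyE_apply (big_ord_widen N (fun i => p`_i * a (n + i)%N) hN).
rewrite [RHS](bigID (fun i : 'I_N => (i < size p)%N)) /= [X in _ + X]big1 ?addr0 // => i.
by rewrite -leqNgt => /(nth_default 0) ->; rewrite mul0r.
Qed.

Lemma pE_add p q a n : polyE_apply (p + q) a n = polyE_apply p a n + polyE_apply q a n.
Proof.
set N := maxn (size p) (size q).
have hp : (size p <= N)%N by rewrite leq_maxl.
have hq : (size q <= N)%N by rewrite leq_maxr.
have hpq : (size (p + q)%R <= N)%N by rewrite (leq_trans (size_polyD _ _)).
rewrite (@pE_wide p a n N hp) (@pE_wide q a n N hq) (@pE_wide (p+q) a n N hpq) -big_split /=.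
by apply: eq_bigr => i _; rewrite coefD mulrDl.
Qed.

Lemma pE_scale c p a n : polyE_apply (c *: p) a n = c * polyE_apply p a n.
Proof.
have h : (size (c *: p) <= size p)%N by apply: size_scale_leq.
rewrite (@pE_wide _ a n _ h) /polyE_apply mulr_sumr; apply: eq_bigr => i _.
by rewrite coefZ mulrA.
Qed.

Lemma pE_opp p a n : polyE_apply (- p) a n = - polyE_apply p a n.
Proof. by rewrite -scaleN1r pE_scale mulN1r. Qed.

Lemma pE_sub p q a n : polyE_apply (p - q) a n = polyE_apply p a n - polyE_apply q a n.
Proof. by rewrite pE_add pE_opp. Qed.

Lemma pE_C c a n : polyE_apply c%:P a n = c * a n.
Proof.
have h : (size c%:P <= 1)%N by apply: size_polyC_leq1.
by rewrite (@pE_wide _ a n _ h) big_ord1 coefC addn0.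
Qed.

Lemma pE_0 a n : polyE_apply 0 a n = 0.
Proof. by rewrite /polyE_apply size_poly0 big_ord0. Qed.

Lemma pE_MX p a n : polyE_apply (p * 'X) a n = polyE_apply p a n.+1.
Proof.
have h : (size (p * 'X)%R <= (size p).+1)%N.
  by rewrite (leq_trans (size_polyMleq _ _)) // size_polyX addn2.
rewrite (@pE_wide _ a n _ h) big_ord_recl coefMX /= mul0r add0r /polyE_apply.
by apply: eq_bigr => i _; rewrite coefMX /= addnS.
Qed.

Lemma pE_mul p q a n :
  polyE_apply (p * q) a n = polyE_apply p (polyE_apply q a) n.
Proof.
elim/poly_ind: p n => [|p c IH] n; first by rewrite mul0r !pE_0.
rewrite mulrDl pE_add -mulrA [_ * q]mulrC mulrA pE_MX IH -pE_MX.
by rewrite mul_polyC pE_scale pE_add pE_C.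
Qed.

Lemma pE_Xn k a n : polyE_apply 'X^k a n = a (n + k)%N.
Proof.
elim: k n => [|k IH] n; first by rewrite expr0 pE_C mul1r addn0.
by rewrite exprSr pE_MX IH addSnnS.
Qed.

Lemma pE_ext p a b n : (forall k, a k = b k) -> polyE_apply p a n = polyE_apply p b n.
Proof. by move=> h; apply: eq_bigr => i _; rewrite h. Qed.

Lemma pE_zero p a n : (forall k, a k = 0) -> polyE_apply p a n = 0.
Proof. by move=> h; rewrite /polyE_apply big1 // => i _; rewrite h mulr0. Qed.

Lemma annih_mul u p a : annihilates p a -> annihilates (u * p) a.
Proof. by move=> hp n; rewrite pE_mul; apply: pE_zero. Qed.

Lemma annih_lin p q u v a : annihilates p a -> annihilates q a ->
  annihilates (u * p + v * q) a.
Proof. by move=> hp hq n; rewrite pE_add (@annih_mul u p a hp) (@annih_mul v q a hq) addr0. Qed.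

Lemma pE_XsubC l a n : polyE_apply ('X - l%:P) a n = a n.+1 - l * a n.
Proof. by rewrite pE_sub -[X in polyE_apply X](expr1) pE_Xn pE_C addn1. Qed.

Lemma pE_XnsubC k l a n : polyE_apply ('X^k - l%:P) a n = a (n + k)%N - l * a n.
Proof. by rewrite pE_sub pE_Xn pE_C. Qed.

Lemma geo_zero (b : nat -> F) (l : F) m0 : annihilates ('X - l%:P) b -> l != 0 ->
  b m0 = 0 -> forall n, b n = 0.
Proof.
move=> hb hl h0.
have hg : forall n, b n = l ^+ n * b 0%N.
  elim=> [|n IH]; first by rewrite expr0 mul1r.
  by have := hb n; rewrite pE_XsubC => /eqP; rewrite subr_eq0 => /eqP ->; rewrite IH exprS mulrA.
have hb0 : b 0%N = 0.
  by move: h0; rewrite hg => /eqP; rewrite mulf_eq0 (negbTE (expf_neq0 _ hl)) => /eqP.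
by move=> n; rewrite hg hb0 mulr0.
Qed.

End Ops.

Lemma ext_root (F : fieldType) (p : {poly F}) : (1 < size p)%N ->
  exists (L : fieldType) (h : {rmorphism F -> L}) (z : L), root (map_poly h p) z.
Proof.
move: {2}(size p) (leqnn (size p)) => n; elim: n p => [|n IH] p hs hp.
  by move: (leq_trans hp hs).
case: (classic (irreducible_poly p)) => [irr|nirr].
  have [L _ [z hz _]] := irredp_FAdjoin irr.
  by exists L, (in_alg L), z.
have [q [hq1 hqp hnq]] : exists q : {poly F}, [/\ size q != 1%N, q %| p & ~~ (q %= p)].
  apply: NNPP => H; apply: nirr; split => // q h1 h2.
  apply/negPn/negP => h3; apply: H; by exists q.
have p0 : p != 0 by rewrite -size_poly_gt0 (ltn_trans _ hp).
have q0 : q != 0 by apply: contraNneq p0 => q0; move: hqp; rewrite q0 dvd0p.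
have hle := dvdp_leq p0 hqp.
have hne : size q != size p by rewrite dvdp_size_eqp.
have [L [h [z hz]]] : exists (L : fieldType) (h : {rmorphism F -> L}) (z : L), root (map_poly h q) z.
  apply: IH.
    by rewrite -ltnS (leq_trans _ hs) // ltn_neqAle hne hle.
  by rewrite ltn_neqAle eq_sym hq1 size_poly_gt0.
exists L, h, z; apply: root_dvdp hz; by rewrite dvdp_map.
Qed.

Lemma annih_map (F L : fieldType) (h : {rmorphism F -> L}) (Q : {poly F}) b :
  annihilates Q b -> annihilates (map_poly h Q) (fun n => h (b n)).
Proof.
move=> hQ n; rewrite /polyE_apply size_map_poly.
transitivity (h (polyE_apply Q b n)); last by rewrite hQ rmorph0.
rewrite /polyE_apply rmorph_sum; apply: eq_bigr => i _.
by rewrite coef_map rmorphM.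
Qed.

Definition extk {e} (k : 'I_e -> bool) (t : bool) : 'I_e.+1 -> bool :=
  fun i => if unlift ord_max i is Some j then k j else t.

Lemma extk_sum e (k : 'I_e -> bool) t (m : 'I_e.+1 -> nat) :
  (\sum_(i < e.+1) extk k t i * m i =
   \sum_(i < e) k i * m (widen_ord (leqnSn e) i) + t * m ord_max)%N.
Proof.
rewrite big_ord_recr /= /extk unlift_none; congr (_ + _)%N.
apply: eq_bigr => i _.
have -> : widen_ord (leqnSn e) i = lift ord_max i by apply: val_inj; rewrite /= /bump leqNgt ltn_ord.
by rewrite liftK.
Qed.

Section Main.
Variable K : fieldType.
Variable P : {poly K}.
Hypothesis nondeg : nondegenerate_poly P.
Hypothesis Hcop : forall (F : fieldType) (g : {rmorphism K -> F}) (Q : {poly F}) (l : F) (M : nat),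
  Q %| map_poly g P -> root Q l -> (0 < M)%N ->
  exists U V : {poly F}, U * Q + V * ('X^M - (l ^+ M)%:P) = 'X - l%:P.

Lemma lift_root (F : fieldType) (g : {rmorphism K -> F}) (Q : {poly F}) :
  (1 < size Q)%N -> Q %| map_poly g P ->
  exists (L : fieldType) (h : {rmorphism F -> L}) (l : L) (R : {poly L}),
    [/\ map_poly h Q = R * ('X - l%:P), l != 0 &
        map_poly h Q %| map_poly (h \o g) P].
Proof.
move=> hs hd; have [L [h [l hl]]] := ext_root hs.
have hd' : map_poly h Q %| map_poly (h \o g) P by rewrite map_poly_comp dvdp_map.
exists L, h, l, (map_poly h Q %/ ('X - l%:P)); split.
- by rewrite divpK // dvdp_XsubCl.
- have := nondeg (root_dvdp hd' hl) (root_dvdp hd' hl); by case.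
- exact: hd'.
Qed.

Lemma main e : forall (F : fieldType) (g : {rmorphism K -> F}) (Q : {poly F}) (b : nat -> F) m0
  (m : 'I_e -> nat), size Q = e.+2 -> Q %| map_poly g P -> annihilates Q b ->
  (forall i, 0 < m i)%N ->
  (forall k : 'I_e -> bool, b (m0 + \sum_(i < e) k i * m i)%N = 0) -> forall n, b n = 0.
Proof.
elim: e => [|e IH] F g Q b m0 m hs hd hQ hm hz n.
  have hs1 : (1 < size Q)%N by rewrite hs.
  have [L [h [l [R [hR hl hd']]]]] := lift_root hs1 hd.
  have hQ' := annih_map h hQ.
  have R0 : R != 0 by apply/eqP => R0; move: hR; rewrite R0 mul0r => /eqP; rewrite map_poly_eq0 => /eqP Q0; move: hs; rewrite Q0 size_poly0.
  have hsR : size R = 1%N.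
    by move: hs; rewrite -(size_map_poly h) hR size_Mmonic ?monicXsubC // size_XsubC addn2 => -[].
  have hRC : R = (R`_0)%:P by apply: size1_polyC; rewrite hsR.
  have c0 : R`_0 != 0 by rewrite -polyC_eq0 -hRC.
  have hX : annihilates ('X - l%:P) (fun n => h (b n)).
    move=> k; have := hQ' k; rewrite hR pE_mul hRC pE_C => /eqP.
    by rewrite mulf_eq0 (negbTE c0) => /eqP.
  apply/eqP; rewrite -(fmorph_eq0 h); apply/eqP; apply: (geo_zero (m0 := m0) hX hl _ n).
  by have := hz (fun _ => false); rewrite big_ord0 addn0 => ->; rewrite rmorph0.
have hs1 : (1 < size Q)%N by rewrite hs.
have [L [h [l [R [hR hl hd']]]]] := lift_root hs1 hd.
set bb := fun n => h (b n).
have hQ' : annihilates (map_poly h Q) bb := annih_map h hQ.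
set M := m ord_max.
have hM : (0 < M)%N := hm _.
set XM := 'X^M - (l ^+ M)%:P.
have hdX : ('X - l%:P) %| XM by rewrite dvdp_XsubCl /root !hornerE subrr.
set c := fun n => polyE_apply XM bb n.
have R0 : R != 0 by apply/eqP => R0; move: hR; rewrite R0 mul0r => /eqP; rewrite map_poly_eq0 => /eqP Q0; move: hs; rewrite Q0 size_poly0.
have hsR : size R = e.+2.
  by move: hs; rewrite -(size_map_poly h) hR size_Mmonic ?monicXsubC // size_XsubC addn2 => -[].
have hRd : R %| map_poly (h \o g) P by apply: dvdp_trans hd'; rewrite hR dvdp_mulr.
have hRc : annihilates R c.
  move=> k; rewrite /c -pE_mul -(divpK hdX) mulrA [R * _]mulrC -mulrA -hR.
  exact: annih_mul.
have hc := IH L (h \o g) R c m0 (fun i => m (widen_ord (leqnSn e) i)) hsR hRd hRc (fun i => hm _).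
have hXM : annihilates XM bb.
  move=> k; apply: hc => k'.
  rewrite /c pE_XnsubC /bb.
  have := hz (extk k' true); have := hz (extk k' false).
  rewrite !extk_sum /= addn0 mul1n addnA => -> ->.
  by rewrite rmorph0 mulr0 subrr.
have hrl : root (map_poly h Q) l by rewrite hR rootM root_XsubC eqxx orbT.
have [U [V hUV]] := Hcop hd' hrl hM.
have hX : annihilates ('X - l%:P) bb by rewrite -hUV; apply: annih_lin.
apply/eqP; rewrite -(fmorph_eq0 h); apply/eqP; apply: (geo_zero (m0 := m0) hX hl _ n).
by rewrite /bb; have := hz (fun _ => false); rewrite big1 ?addn0 // => ->; rewrite rmorph0.
Qed.
End Main.

Lemma cop_lin (F : fieldType) (A B D : {poly F}) : coprimep A B ->
  exists U V : {poly F}, U * (A * D) + V * (B * D) = D.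
Proof.
case/Bezout_coprimepP => [[u1 u2]] /= /eqpP [[c1 c2]] /andP [/= c1n0 c2n0] e.
exists ((c1 / c2) *: u1), ((c1 / c2) *: u2).
have e' : (c1 / c2) *: (u1 * A + u2 * B) = 1.
  by rewrite mulrC -scalerA e scalerA mulVf // scale1r.
by rewrite !mulrA -mulrDl -!scalerAl -scalerDr e' mul1r.
Qed.

Lemma common_root (F : fieldType) (A B : {poly F}) : A != 0 -> ~~ coprimep A B ->
  exists (L : fieldType) (h : {rmorphism F -> L}) (z : L),
    root (map_poly h A) z /\ root (map_poly h B) z.
Proof.
move=> A0; rewrite coprimep_def => hG.
have G0 : gcdp A B != 0 by rewrite gcdp_eq0 negb_and A0.
have hs : (1 < size (gcdp A B))%N.
  by rewrite ltn_neqAle eq_sym hG size_poly_gt0.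
have [L [h [z hz]]] := ext_root hs.
exists L, h, z; split; apply: root_dvdp hz; rewrite dvdp_map.
  exact: dvdp_gcdl.
exact: dvdp_gcdr.
Qed.

Section Cop.
Variable K : fieldType.
Variable P : {poly K}.
Hypothesis P0 : P != 0.
Hypothesis nondeg : nondegenerate_poly P.

Lemma pow_eq_root (L : fieldType) (f : {rmorphism K -> L}) (z l : L) M :
  root (map_poly f P) z -> root (map_poly f P) l -> (0 < M)%N -> z ^+ M = l ^+ M -> z = l.
Proof.
move=> hz hl hM e; apply/eqP; apply: contraT => hne.
have [l0 _] := nondeg hl hz.
have [_ /(_ hne M hM)] := nondeg hz hl.
by rewrite expr_div_n e divff ?eqxx // expf_neq0.
Qed.

Lemma setup (F : fieldType) (g : {rmorphism K -> F}) (Q : {poly F}) (l : F) (M : nat) :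
  Q %| map_poly g P -> root Q l -> (0 < M)%N ->
  Q != 0 /\ ('X^M - (l ^+ M)%:P) = (('X^M - (l ^+ M)%:P) %/ ('X - l%:P)) * ('X - l%:P).
Proof.
move=> hd hr hM; split.
  apply/eqP => Q0; move: hd; rewrite Q0 dvd0p map_poly_eq0; exact/negP.
by rewrite divpK // dvdp_XsubCl /root !hornerE subrr.
Qed.


Lemma Hcop_b (hsimp : simple_poly P) (F : fieldType) (g : {rmorphism K -> F}) (Q : {poly F}) (l : F) (M : nat) :
  Q %| map_poly g P -> root Q l -> (0 < M)%N ->
  exists U V : {poly F}, U * Q + V * ('X^M - (l ^+ M)%:P) = 'X - l%:P.
Proof.
move=> hd hr hM; have [Q0 hXM] := setup hd hr hM.
set D := 'X - l%:P in hXM *; set XM := 'X^M - (l ^+ M)%:P in hXM *.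
set T := XM %/ D in hXM.
have hQ : Q = (Q %/ D) * D by rewrite divpK // dvdp_XsubCl.
set R := Q %/ D in hQ.
have R0 : R != 0 by apply: contraNneq Q0 => R0; rewrite hQ R0 mul0r.
suff hc : coprimep R T.
  have [U [V e]] := cop_lin D hc; exists U, V; by rewrite {1}hQ hXM.
apply/negP => /negP hn.
have [L [h2 [z [hzR hzT]]]] := common_root R0 hn.
have hQd : map_poly h2 Q %| map_poly (h2 \o g) P by rewrite map_poly_comp dvdp_map.
have hmQ : map_poly h2 Q = map_poly h2 R * ('X - (h2 l)%:P).
  by rewrite {1}hQ rmorphM /= map_polyXsubC.
have hzP : root (map_poly (h2 \o g) P) z by apply: root_dvdp hQd _; rewrite hmQ rootM hzR.
have hlP : root (map_poly (h2 \o g) P) (h2 l).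
  by apply: root_dvdp hQd _; rewrite hmQ rootM root_XsubC eqxx orbT.
have hzM : z ^+ M = (h2 l) ^+ M.
  have : root (map_poly h2 XM) z by rewrite hXM rmorphM rootM /= hzT.
  rewrite /XM rmorphB /= map_polyXn map_polyC /= rmorphXn /root !hornerE.
  by rewrite subr_eq0 => /eqP.
have ez := pow_eq_root hzP hlP hM hzM.
apply: (hsimp _ (h2 \o g) (h2 l)); rewrite expr2; apply: dvdp_trans hQd; rewrite hmQ.
by apply: dvdp_mul => //; rewrite dvdp_XsubCl -ez.
Qed.


Lemma Hcop_a (hch : [pchar K] =i pred0) (F : fieldType) (g : {rmorphism K -> F}) (Q : {poly F}) (l : F) (M : nat) :
  Q %| map_poly g P -> root Q l -> (0 < M)%N ->
  exists U V : {poly F}, U * Q + V * ('X^M - (l ^+ M)%:P) = 'X - l%:P.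
Proof.
move=> hd hr hM; have [Q0 hXM] := setup hd hr hM.
set D := 'X - l%:P in hXM *; set XM := 'X^M - (l ^+ M)%:P in hXM *.
set T := XM %/ D in hXM.
have l0 : l != 0 by have [] := nondeg (root_dvdp hd hr) (root_dvdp hd hr).
have hTl : T.[l] = l ^+ M.-1 *+ M.
  have := congr1 (fun p => (deriv p).[l]) hXM => /=.
  rewrite derivM derivXsubC /XM derivB derivXn derivC subr0.
  rewrite !hornerE subrr mulr0 add0r.
  by rewrite hornerMn hornerXn => <-.
have Tl0 : T.[l] != 0.
  rewrite hTl -mulr_natr mulf_eq0 negb_or expf_neq0 //=.
  have := (pcharf0P _).1 hch M; rewrite -(rmorph_nat g) fmorph_eq0 => ->.
  by rewrite -lt0n.
suff hc : coprimep Q T.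
  have [U [V e]] := cop_lin D hc; exists (U * D), V.
  by rewrite -mulrA [D * Q]mulrC hXM.
apply/negP => /negP hn.
have [L [h2 [z [hzQ hzT]]]] := common_root Q0 hn.
have hQd : map_poly h2 Q %| map_poly (h2 \o g) P by rewrite map_poly_comp dvdp_map.
have hzP : root (map_poly (h2 \o g) P) z by apply: root_dvdp hQd _.
have hlP : root (map_poly (h2 \o g) P) (h2 l).
  by apply: root_dvdp hQd _; rewrite /root horner_map (eqP hr) rmorph0.
have hzM : z ^+ M = (h2 l) ^+ M.
  have : root (map_poly h2 XM) z by rewrite hXM rmorphM rootM /= hzT.
  rewrite /XM rmorphB /= map_polyXn map_polyC /= rmorphXn /root !hornerE.
  by rewrite subr_eq0 => /eqP.
have ez := pow_eq_root hzP hlP hM hzM.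
by move: hzT; rewrite ez /root horner_map fmorph_eq0 (negbTE Tl0).
Qed.

End Cop.

Lemma final (K : fieldType) (a : nat -> K) (P : {poly K}) :
  is_min_poly a P -> (exists n, a n != 0) -> nondegenerate_poly P ->
  (forall (F : fieldType) (g : {rmorphism K -> F}) (Q : {poly F}) (l : F) (M : nat),
    Q %| map_poly g P -> root Q l -> (0 < M)%N ->
    exists U V : {poly F}, U * Q + V * ('X^M - (l ^+ M)%:P) = 'X - l%:P) ->
  ~ contains_balanced (rec_order P).-1 (zero_set a).
Proof.
move=> [Pm [hP _]] [n0 hn0] nd hc [S [[m0 [m [hm hS]]] hSZ]].
have hz : forall k : 'I_(rec_order P).-1 -> bool, a (m0 + \sum_(i < (rec_order P).-1) k i * m i)%N = 0.
  by move=> k; apply: hSZ; apply/hS; exists k.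
have P0 : P != 0 by apply: monic_neq0.
move: m hm hS hz; rewrite /rec_order.
case hs : (size P) => [|[|e]] /= m hm hS hz.
- by move: P0; rewrite -size_poly_eq0 hs.
- move: (hP n0); rewrite /polyE_apply hs big_ord1 addn0.
  have -> : P`_0 = 1 by move: Pm; rewrite monicE /lead_coef hs => /eqP.
  by rewrite mul1r => h; move: hn0; rewrite h eqxx.
pose g : {rmorphism K -> K} := idfun.
have hQ : annihilates (map_poly g P) a := annih_map g hP.
have hsQ : size (map_poly g P) = e.+2 by rewrite size_map_poly.
have h := main nd hc hsQ (dvdpp _) hQ hm hz n0.
by move: hn0; rewrite h eqxx.
Qed.

Theorem lemma2p6 (K : fieldType) (a : nat -> K) (P : {poly K}) :
  is_recurrence a -> is_min_poly a P -> (exists n, a n != 0) ->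
  ([pchar K] =i pred0 -> nondegenerate_poly P ->
     ~ contains_balanced (rec_order P).-1 (zero_set a)) /\
  ((exists p : nat, p \in [pchar K]) -> simple_poly P -> nondegenerate_poly P ->
     ~ contains_balanced (rec_order P).-1 (zero_set a)).
Proof.
move=> _ hmin hnz.
have P0 : P != 0 by case: hmin => Pm _; apply: monic_neq0.
split.
  move=> hch nd; apply: (final hmin hnz nd) => F g Q l M.
  exact: (Hcop_a P0 nd hch).
move=> _ hs nd; apply: (final hmin hnz nd) => F g Q l M.
exact: (Hcop_b P0 nd hs).
Qed.
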